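(* Assume that $(XX^T)^{-1}$ and $(X\Sigma^{-1}X^T)^{-1}$ exist with probability $1$ and that their expectations over $X$ exist. Then $b^w_l\le b^w_u$ and $v^w_l\ge v^w_u$.
   Context: Let $p>n$. The rows $x_1,\dots,x_n$ of $X\in\mathbb{R}^{n\times p}$ are i.i.d. from a distribution $P_x$ on $\mathbb{R}^p$ with $\mathbb{E}[x]=0$ and positive definite covariance $\Sigma=\mathrm{Var}(x)$, which is known. The responses are $Y=Xw+\epsilon$, where: - $w\in\mathbb{R}^p$ is random, independent of $X$, with $\mathbb{E}[w]=0$ and $\mathbb{E}[ww^T]=\tau^2I_p$; - $\epsilon\in\mathbb{R}^n$ has i.i.d. mean-zero entries of variance $\sigma^2$, independent of $(X,w)$. Define: - $b^w_l=\mathrm{tr}\big(\Sigma-\Sigma\mathbb{E}_X[X^T(XX^T)^{-1}X]\big)$; - $v^w_l=\mathrm{tr}\big(\Sigma\mathbb{E}_X[X^T(XX^T)^{-2}X]\big)$; - $b^w_u=\mathrm{tr}\big(\Sigma-\mathbb{E}_X[X^T(X\Sigma^{-1}X^T)^{-1}X]\big)$; - $v^w_u=\mathrm{tr}\big(\mathbb{E}_X[(X\Sigma^{-1}X^T)^{-1}]\big)$. These are the bias and variance coefficients (bias $\tau^2b$, variance $\sigma^2v$) of the reducible errors of, respectively, the minimum-norm interpolator $\hat w=X^T(XX^T)^{-1}Y$ and the minimum-variance interpolator $\tilde w=\Sigma^{-1}X^T(X\Sigma^{-1}X^T)^{-1}Y$. *)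

(* Defs.v *)
From HB Require Import structures.
From mathcomp Require Import all_boot all_order all_algebra.
From mathcomp Require Import all_classical all_reals all_analysis.
Set Implicit Arguments. Unset Strict Implicit. Unset Printing Implicit Defensive.
Import Order.TTheory GRing.Theory Num.Theory.
Local Open Scope classical_set_scope.
Local Open Scope ring_scope.

Section Defs.
Context {R : realType} {d : measure_display} {T : measurableType d}.

Definition Ex (P : probability T R) (f : T -> R) : R := Rintegral P setT f.

Definition Emx (P : probability T R) (a b : nat) (F : T -> 'M[R]_(a, b))
  : 'M[R]_(a, b) := \matrix_(i, j) Ex P (fun t => F t i j).

Definition integrableR (P : probability T R) (f : T -> R) : Prop :=
  P.-integrable setT (fun t => (f t)%:E).

(* The rows x_1..x_n of X are mutually independent random vectors:
   product rule on all (Borel) rectangles, which form a pi-system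
   generating the product sigma-algebra of R^p. *)
Definition rows_independent (P : probability T R) (n p : nat)
  (X : T -> 'M[R]_(n, p)) : Prop :=
  forall B : 'I_n -> 'I_p -> set R, (forall i j, measurable (B i j)) ->
    fine (P [set t | forall i j, B i j (X t i j)]) =
    \prod_(i < n) fine (P [set t | forall j, B i j (X t i j)]).

Definition rows_identically_distributed (P : probability T R) (n p : nat)
  (X : T -> 'M[R]_(n, p)) : Prop :=
  forall (i i' : 'I_n) (B : 'I_p -> set R), (forall j, measurable (B j)) ->
    P [set t | forall j, B j (X t i j)] = P [set t | forall j, B j (X t i' j)].

Definition posdef (p : nat) (S : 'M[R]_p) : Prop :=
  S^T = S /\ forall v : 'rV[R]_p, v != 0 -> 0 < (v *m S *m v^T) 0 0.

Definition bwl (P : probability T R) n p (S : 'M[R]_p) (X : T -> 'M[R]_(n, p)) : R :=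
  \tr (S - S *m Emx P (fun t => (X t)^T *m invmx (X t *m (X t)^T) *m X t)).
Definition vwl (P : probability T R) n p (S : 'M[R]_p) (X : T -> 'M[R]_(n, p)) : R :=
  \tr (S *m Emx P (fun t => (X t)^T *m (invmx (X t *m (X t)^T)) ^+ 2 *m X t)).
Definition bwu (P : probability T R) n p (S : 'M[R]_p) (X : T -> 'M[R]_(n, p)) : R :=
  \tr (S - Emx P (fun t => (X t)^T *m invmx (X t *m invmx S *m (X t)^T) *m X t)).
Definition vwu (P : probability T R) n p (S : 'M[R]_p) (X : T -> 'M[R]_(n, p)) : R :=
  \tr (Emx P (fun t => invmx (X t *m invmx S *m (X t)^T))).

End Defs.

(* Main.v *)
Require Import Defs.
From HB Require Import structures.
From mathcomp Require Import all_boot all_order all_algebra.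
From mathcomp Require Import all_classical all_reals all_analysis.
From mathcomp Require Import measurable_realfun.
From mathcomp Require Import lra.
Set Implicit Arguments. Unset Strict Implicit. Unset Printing Implicit Defensive.
Import Order.TTheory GRing.Theory Num.Theory.
Local Open Scope classical_set_scope.
Local Open Scope ring_scope.

Section MX.
Context {R : realType}.

Lemma posdef_unit p (S : 'M[R]_p) : posdef S -> S \in unitmx.
Proof.
case=> _ hq; rewrite -row_free_unit -kermx_eq0; apply/negPn/negP => hk.
have [i hi] : exists i, row i (kermx S) != 0.
  apply/existsP; apply: contraNT hk; rewrite negb_exists => /forallP h.
  by apply/eqP/row_matrixP => i; rewrite row0; apply/eqP; move/negPn: (h i).
have := hq _ hi; rewrite -row_mul mulmx_ker row0 mul0mx mxE ltxx.
by [].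
Qed.

Lemma quad_ge0 p (S : 'M[R]_p) (v : 'rV_p) : posdef S -> 0 <= (v *m S *m v^T) 0 0.
Proof.
case=> _ hq; have [->|hv] := eqVneq v 0; first by rewrite mul0mx mul0mx mxE.
exact/ltW/hq.
Qed.

Lemma diag_quad p m (S : 'M[R]_p) (E : 'M[R]_(p, m)) j :
  (E^T *m S *m E) j j = (row j E^T *m S *m (row j E^T)^T) 0 0.
Proof.
rewrite tr_row trmxK -row_mul !mxE; apply: eq_bigr => k _; rewrite !mxE.
by [].
Qed.

Lemma diag_ge0 p m (S : 'M[R]_p) (E : 'M[R]_(p, m)) j : posdef S ->
  0 <= (E^T *m S *m E) j j.
Proof. by move=> hS; rewrite diag_quad; apply: quad_ge0. Qed.

Lemma tr_quad_ge0 p m (S : 'M[R]_p) (E : 'M[R]_(p, m)) : posdef S ->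
  0 <= \tr (E^T *m S *m E).
Proof. by move=> hS; rewrite /mxtrace; apply: sumr_ge0 => j _; apply: diag_ge0. Qed.

Section Core.
Variables (n p : nat) (M : 'M[R]_(n, p)) (S : 'M[R]_p).
Hypothesis hS : posdef S.
Hypothesis hW : M *m M^T \in unitmx.
Hypothesis hA : M *m invmx S *m M^T \in unitmx.

Let Si := invmx S.
Let W := invmx (M *m M^T).
Let A := invmx (M *m Si *m M^T).
Let B := M^T *m W.
Let D := Si *m M^T *m A.
Let C := B - D.

Lemma hSu : S \in unitmx. Proof. exact: posdef_unit. Qed.
Lemma SSi : S *m Si = 1%:M. Proof. exact: mulmxV hSu. Qed.
Lemma SiS : Si *m S = 1%:M. Proof. exact: mulVmx hSu. Qed.
Lemma SiT : Si^T = Si. Proof. by rewrite /Si trmx_inv hS.1. Qed.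
Lemma WT : W^T = W. Proof. by rewrite /W trmx_inv trmx_mul trmxK. Qed.
Lemma MB : M *m B = 1%:M. Proof. by rewrite /B mulmxA mulmxV. Qed.
Lemma MD : M *m D = 1%:M. Proof. by rewrite /D !mulmxA mulmxV. Qed.
Lemma MC : M *m C = 0. Proof. by rewrite /C mulmxBr MB MD subrr. Qed.

Lemma DSD : D^T *m S *m D = A^T.
Proof.
rewrite /D !trmx_mul trmxK SiT.
rewrite -!mulmxA (mulmxA Si S) SiS mul1mx (mulmxA Si) (mulmxA M) (mulmxA M Si).
rewrite (mulmxV hA) mulmx1.
by [].
Qed.

Lemma CSD : C^T *m S *m D = 0.
Proof.
rewrite /D !mulmxA -(mulmxA _ S Si) SSi mulmx1 -trmx_mul MC trmx0.
by rewrite !mul0mx.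
Qed.

Lemma DSC : D^T *m S *m C = 0.
Proof.
rewrite /D !trmx_mul trmxK SiT -!mulmxA (mulmxA Si S) SiS mul1mx MC.
by rewrite !mulmx0.
Qed.

Lemma BSB : B^T *m S *m B = C^T *m S *m C + A^T.
Proof.
have -> : B = C + D by rewrite /C subrK.
rewrite mulmxDr (raddfD (@trmx _ _ _) C D) /= !mulmxDl CSD DSC DSD.
by rewrite addr0 add0r.
Qed.

Let P := B *m M.
Lemma PT : P^T = P.
Proof. by rewrite /P /B !trmx_mul trmxK WT mulmxA. Qed.
Lemma PP : P *m P = P.
Proof. by rewrite /P mulmxA -(mulmxA B M B) MB mulmx1. Qed.
Lemma PE : M^T *m W *m M = P. Proof. by []. Qed.

Lemma trSP : \tr (S *m P) = \tr (P^T *m S *m P).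
Proof. by rewrite PT -[in RHS]mulmxA [in RHS]mxtrace_mulC -[in RHS]mulmxA PP. Qed.

Lemma PSP : P^T *m S *m P = (C *m M)^T *m S *m (C *m M) + M^T *m A^T *m M.
Proof.
rewrite /P (trmx_mul B M).
have -> : M^T *m B^T *m S *m (B *m M) = M^T *m (B^T *m S *m B) *m M by rewrite !mulmxA.
by rewrite BSB mulmxDr mulmxDl (trmx_mul C M) !mulmxA.
Qed.

Lemma FuT j : (M^T *m A *m M) j j = (M^T *m A^T *m M) j j.
Proof.
have -> : M^T *m A^T *m M = (M^T *m A *m M)^T by rewrite !trmx_mul trmxK mulmxA.
by rewrite [in RHS]mxE.
Qed.

Lemma Fu_ge0 j : 0 <= (M^T *m A *m M) j j.
Proof.
rewrite FuT -DSD.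
have -> : M^T *m (D^T *m S *m D) *m M = (D *m M)^T *m S *m (D *m M).
  by rewrite (trmx_mul D M) !mulmxA.
exact: diag_ge0.
Qed.

Lemma Fu_le j : (M^T *m A *m M) j j <= (P^T *m S *m P) j j.
Proof.
rewrite PSP [X in _ <= X]mxE -FuT.
by rewrite lerDr diag_ge0.
Qed.

Lemma var_ineq : \tr A <= \tr (S *m (M^T *m W ^+ 2 *m M)).
Proof.
have -> : \tr (S *m (M^T *m W ^+ 2 *m M)) = \tr (B^T *m S *m B).
  rewrite [RHS]mxtrace_mulC [LHS]mxtrace_mulC; congr (mxtrace _).
  by rewrite /B trmx_mul trmxK WT expr2 -mulmxE !mulmxA.
by rewrite BSB mxtraceD mxtrace_tr lerDr tr_quad_ge0.
Qed.

Lemma bias_ineq : \tr (M^T *m A *m M) <= \tr (S *m (M^T *m W *m M)).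
Proof.
rewrite PE trSP PSP mxtraceD.
have -> : M^T *m A^T *m M = (M^T *m A *m M)^T by rewrite !trmx_mul trmxK mulmxA.
by rewrite mxtrace_tr lerDr tr_quad_ge0.
Qed.

Lemma le_sum_term (I : finType) (F : I -> R) k : (forall c, 0 <= F c) -> F k <= \sum_c F c.
Proof. by move=> h; rewrite (bigD1 k) //= lerDl sumr_ge0. Qed.

Lemma P_bound k j : `|(M^T *m W *m M) k j| <= 1.
Proof.
rewrite PE.
have hs c : P c c = \sum_a P a c * P a c.
  have e : P = P^T *m P by rewrite PT PP.
  rewrite {1}e mxE; apply: eq_bigr => a _; rewrite mxE.
  by [].
have hjj := hs j.
have h1 : P k j * P k j <= P j j.
  by rewrite hjj (le_sum_term (F := fun a => P a j * P a j)) // => c; rewrite -expr2 sqr_ge0.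
have h2 : P j j * P j j <= P j j.
  by rewrite {3}hjj (le_sum_term (F := fun a => P a j * P a j)) // => c; rewrite -expr2 sqr_ge0.
have h0 : 0 <= P j j by apply: le_trans h1; rewrite -expr2 sqr_ge0.
have h3 : P j j <= 1 by nra.
have h4 : P k j * P k j <= 1 by lra.
rewrite ler_norml; apply/andP; split; nra.
Qed.

Lemma G_bound k j : `|(M^T *m W ^+ 2 *m M) k j| <= 2 * \sum_i `|W i i|.
Proof.
have -> : M^T *m W ^+ 2 *m M = B *m B^T.
  by rewrite /B trmx_mul trmxK WT expr2 -mulmxE !mulmxA.
have htr : \tr (B *m B^T) = \tr W.
  rewrite mxtrace_mulC /B trmx_mul trmxK WT.
  by rewrite -mulmxA (mulmxA M) mulmxV // mulmx1.
have htr2 : \tr (B *m B^T) = \sum_c \sum_a B c a * B c a.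
  apply: eq_bigr => c _; rewrite mxE.
  by apply: eq_bigr => a _; rewrite [B^T _ _]mxE.
have hW1 : \tr W <= \sum_i `|W i i| by apply: ler_sum => i _; apply: ler_norm.
have hk : \sum_a B k a * B k a <= \tr (B *m B^T).
  rewrite htr2 (le_sum_term (F := fun c => \sum_a B c a * B c a)) //.
  by move=> c; apply: sumr_ge0 => a _; rewrite -expr2 sqr_ge0.
have hj : \sum_a B j a * B j a <= \tr (B *m B^T).
  rewrite htr2 (le_sum_term (F := fun c => \sum_a B c a * B c a)) //.
  by move=> c; apply: sumr_ge0 => a _; rewrite -expr2 sqr_ge0.
rewrite mxE; apply: le_trans (ler_norm_sum _ _ _) _.
apply: (@le_trans _ _ (\sum_a (B k a * B k a + B j a * B j a))).
  apply: ler_sum => a _; rewrite [B^T a j]mxE normrM.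
  set x := B k a; set y := B j a.
  have ex : `|x| * `|x| = x * x by rewrite -normrM ger0_norm // -expr2 sqr_ge0.
  have ey : `|y| * `|y| = y * y by rewrite -normrM ger0_norm // -expr2 sqr_ge0.
  have hh : 0 <= (`|x| - `|y|) * (`|x| - `|y|) by rewrite -expr2 sqr_ge0.
  have := normr_ge0 x; have := normr_ge0 y; nra.
rewrite big_split /=; rewrite htr in hk hj; lra.
Qed.

End Core.

Lemma PSP_bound p (S E : 'M[R]_p) j : (forall a b, `|E a b| <= 1) ->
  `|(E^T *m S *m E) j j| <= \sum_b \sum_a `|S a b|.
Proof.
move=> hE; rewrite mxE; apply: le_trans (ler_norm_sum _ _ _) _.
apply: ler_sum => b _; rewrite normrM.
have hb := hE b j.
apply: (@le_trans _ _ `|(E^T *m S) j b|).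
  by rewrite -[X in _ <= X]mulr1 ler_wpM2l.
rewrite mxE; apply: le_trans (ler_norm_sum _ _ _) _.
apply: ler_sum => a _; rewrite normrM mxE.
by rewrite -[X in _ <= X]mul1r ler_wpM2r.
Qed.

End MX.
Section Plumb.
Context {R : realType} {d : measure_display} {T : measurableType d}.
Variable P : probability T R.

Lemma iR_meas (f : T -> R) : integrableR P f -> measurable_fun setT f.
Proof. by move/(measurable_int P)/measurable_EFinP. Qed.

Lemma iR_le_ae (f g : T -> R) : measurable_fun setT f -> integrableR P g ->
  {ae P, forall t, `|f t| <= g t} -> integrableR P f.
Proof.
move=> mf /integrableP[mg gfin] hae; apply/integrableP; split.
  exact/measurable_EFinP.
apply: le_lt_trans gfin; apply: ae_ge0_le_integral => //.
- by apply: measurableT_comp => //; exact/measurable_EFinP.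
- by apply: measurableT_comp.
- apply: filterS hae => t h _ /=; rewrite lee_fin (le_trans h) //.
  exact: ler_norm.
Qed.

Lemma iR_cst (c : R) : integrableR P (fun _ => c).
Proof. have := @finite_measure_integrable_cst _ _ _ P setT c measurableT. by []. Qed.

Lemma iR_D (f g : T -> R) : integrableR P f -> integrableR P g -> integrableR P (fun t => f t + g t).
Proof. by move=> hf hg; apply: (eq_integrable measurableT _ _ _ (integrableD measurableT hf hg)) => t _. Qed.

Lemma iR_Z k (f : T -> R) : integrableR P f -> integrableR P (fun t => k * f t).
Proof. by move=> hf; apply: (eq_integrable measurableT _ _ _ (integrableZl measurableT k hf)) => t _. Qed.

Lemma iR_abs (f : T -> R) : integrableR P f -> integrableR P (fun t => `|f t|).
Proof. by move=> hf; apply: (eq_integrable measurableT _ _ _ (integrable_abse hf)) => t _. Qed.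

Lemma iR_sum I (s : seq I) (f : I -> T -> R) : (forall i, integrableR P (f i)) ->
  integrableR P (fun t => \sum_(i <- s) f i t).
Proof.
move=> hf; elim: s => [|i s ih].
  by apply: (eq_integrable measurableT _ _ _ (iR_cst 0)) => t _; rewrite big_nil.
have h := iR_D (hf i) ih; apply: (eq_integrable measurableT _ _ _ h) => t _ /=; by rewrite big_cons.
Qed.

Lemma Ex_sum I (s : seq I) (f : I -> T -> R) : (forall i, integrableR P (f i)) ->
  Ex P (fun t => \sum_(i <- s) f i t) = \sum_(i <- s) Ex P (f i).
Proof.
move=> hf; elim: s => [|i s ih].
  rewrite big_nil /Ex (@eq_Rintegral _ _ _ P _ (fun _ => 0)); last by move=> t _; rewrite big_nil.
  by rewrite Rintegral_cst // mul0r.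
rewrite big_cons -ih /Ex -RintegralD //; last exact: iR_sum.
apply: eq_Rintegral => t _; rewrite ?big_cons //.
exact: hf.

Qed.

Lemma ExZ k (f : T -> R) : integrableR P f -> Ex P (fun t => k * f t) = k * Ex P f.
Proof. by move=> hf; rewrite /Ex RintegralZl. Qed.

Lemma Ex_ge0_ae (h : T -> R) : measurable_fun setT h -> {ae P, forall t, 0 <= h t} -> 0 <= Ex P h.
Proof.
move=> mh hae.
have -> : Ex P h = Ex P (fun t => Num.max (h t) 0).
  rewrite /Ex /Rintegral; congr fine; apply: ae_eq_integral => //.
  - exact/measurable_EFinP.
  - apply/measurable_EFinP; apply: measurable_maxr => //.
  - by apply: filterS hae => t ht _; rewrite max_l.
by apply: Rintegral_ge0 => t _; rewrite le_max lexx orbT.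
Qed.

Lemma Ex_le_ae (f g : T -> R) : integrableR P f -> integrableR P g ->
  {ae P, forall t, f t <= g t} -> Ex P f <= Ex P g.
Proof.
move=> hf hg hae; rewrite -subr_ge0 /Ex -RintegralB //.
apply: Ex_ge0_ae; first by apply: measurable_funB; apply: iR_meas.
by apply: filterS hae => t; rewrite subr_ge0.
Qed.


Definition mmeas m k (F : T -> 'M[R]_(m, k)) :=
  forall i j, measurable_fun setT (fun t => F t i j).

Lemma mmeas_mul m k l (F : T -> 'M[R]_(m, k)) (G : T -> 'M[R]_(k, l)) :
  mmeas F -> mmeas G -> mmeas (fun t => F t *m G t).
Proof.
move=> hF hG i j.
have -> : (fun t => (F t *m G t) i j) = (fun t => \sum_(a <- index_enum 'I_k) F t i a * G t a j).
  by apply: funext => t; rewrite mxE.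
by apply: measurable_sum => a; apply: measurable_funM.
Qed.

Lemma mmeas_tr m k (F : T -> 'M[R]_(m, k)) : mmeas F -> mmeas (fun t => (F t)^T).
Proof.
move=> hF i j.
have -> : (fun t => ((F t)^T) i j) = (fun t => F t j i) by apply: funext => t; rewrite mxE.
exact: hF.
Qed.

Lemma mmeas_cst m k (F : 'M[R]_(m, k)) : mmeas (fun _ => F).
Proof. by move=> i j; exact: measurable_cst. Qed.

Lemma iR_tr m (F : T -> 'M[R]_m) : (forall i, integrableR P (fun t => F t i i)) ->
  integrableR P (fun t => \tr (F t)).
Proof. by move=> h; rewrite /mxtrace; apply: iR_sum. Qed.

Lemma iR_trS m (S : 'M[R]_m) (F : T -> 'M[R]_m) :
  (forall i j, integrableR P (fun t => F t i j)) ->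
  integrableR P (fun t => \tr (S *m F t)).
Proof.
move=> h; apply: iR_tr => i.
have -> : (fun t => (S *m F t) i i) = (fun t => \sum_(a <- index_enum 'I_m) S i a * F t a i).
  by apply: funext => t; rewrite mxE.
by apply: iR_sum => a; apply: iR_Z.
Qed.

Lemma tr_Emx m (F : T -> 'M[R]_m) : (forall i, integrableR P (fun t => F t i i)) ->
  \tr (Emx P F) = Ex P (fun t => \tr (F t)).
Proof.
move=> h; rewrite /mxtrace Ex_sum //; apply: eq_bigr => i _; rewrite mxE.
by [].
Qed.

Lemma tr_SEmx m (S : 'M[R]_m) (F : T -> 'M[R]_m) :
  (forall i j, integrableR P (fun t => F t i j)) ->
  \tr (S *m Emx P F) = Ex P (fun t => \tr (S *m F t)).
Proof.
move=> h; rewrite /mxtrace Ex_sum; last first.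
  move=> i; have -> : (fun t => (S *m F t) i i) = (fun t => \sum_(a <- index_enum 'I_m) S i a * F t a i).
    by apply: funext => t; rewrite mxE.
  by apply: iR_sum => a; apply: iR_Z.
apply: eq_bigr => i _; rewrite mxE.
have -> : (fun t => (S *m F t) i i) = (fun t => \sum_(a <- index_enum 'I_m) S i a * F t a i).
  by apply: funext => t; rewrite mxE.
rewrite Ex_sum; last by move=> a; apply: iR_Z.
by apply: eq_bigr => a _; rewrite mxE ExZ.
Qed.

End Plumb.

Theorem proposition4 (R : realType) (d : measure_display) (T : measurableType d)
  (P : probability T R) (n p : nat) (X : T -> 'M[R]_(n, p)) (Sigma : 'M[R]_p) :
  (n < p)%N ->
  (forall i j, measurable_fun setT (fun t => X t i j)) ->
  rows_independent P X ->
  rows_identically_distributed P X ->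
  (forall i j, integrableR P (fun t => X t i j) /\ Ex P (fun t => X t i j) = 0) ->
  (forall i j k, integrableR P (fun t => X t i j * X t i k) /\
                 Ex P (fun t => X t i j * X t i k) = Sigma j k) ->
  posdef Sigma ->
  {ae P, forall t, X t *m (X t)^T \in unitmx} ->
  {ae P, forall t, X t *m invmx Sigma *m (X t)^T \in unitmx} ->
  (forall i j, integrableR P (fun t => invmx (X t *m (X t)^T) i j)) ->
  (forall i j, integrableR P (fun t => invmx (X t *m invmx Sigma *m (X t)^T) i j)) ->
  bwl P Sigma X <= bwu P Sigma X /\ vwu P Sigma X <= vwl P Sigma X.
Proof.
move=> _ mX _ _ _ _ hS ae1 ae2 iW iA.
have ae : {ae P, forall t, X t *m (X t)^T \in unitmx /\
                           X t *m invmx Sigma *m (X t)^T \in unitmx}.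
  by apply: filterS2 ae1 ae2 => t h1 h2.
have mW : mmeas (fun t => invmx (X t *m (X t)^T)) by move=> i j; apply: iR_meas.
have mA : mmeas (fun t => invmx (X t *m invmx Sigma *m (X t)^T)) by move=> i j; apply: iR_meas.
have mXX : mmeas X by [].
have mFl : mmeas (fun t => (X t)^T *m invmx (X t *m (X t)^T) *m X t).
  by apply: mmeas_mul => //; apply: mmeas_mul => //; apply: mmeas_tr.
have mFu : mmeas (fun t => (X t)^T *m invmx (X t *m invmx Sigma *m (X t)^T) *m X t).
  by apply: mmeas_mul => //; apply: mmeas_mul => //; apply: mmeas_tr.
have mG : mmeas (fun t => (X t)^T *m invmx (X t *m (X t)^T) ^+ 2 *m X t).
  apply: mmeas_mul => //; apply: mmeas_mul; first exact: mmeas_tr.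
  have -> : (fun t => invmx (X t *m (X t)^T) ^+ 2) =
            (fun t => invmx (X t *m (X t)^T) *m invmx (X t *m (X t)^T)).
    by apply: funext => t; rewrite expr2 mulmxE.
  exact: mmeas_mul.
have iFl : forall j k, integrableR P (fun t => ((X t)^T *m invmx (X t *m (X t)^T) *m X t) j k).
  move=> j k; apply: (iR_le_ae (mFl j k) (iR_cst P 1)).
  by apply: filterS ae => t [h1 h2]; apply: P_bound.
have iFu : forall j, integrableR P
    (fun t => ((X t)^T *m invmx (X t *m invmx Sigma *m (X t)^T) *m X t) j j).
  move=> j; apply: (iR_le_ae (mFu j j) (iR_cst P (\sum_b \sum_a `|Sigma a b|))).
  apply: filterS ae => t [h1 h2].
  rewrite ger0_norm; last exact: Fu_ge0.
  apply: le_trans (Fu_le hS h1 h2 j) _.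
  apply: le_trans (ler_norm _) _.
  by apply: PSP_bound => a b; apply: P_bound.
have iG : forall j k, integrableR P (fun t => ((X t)^T *m invmx (X t *m (X t)^T) ^+ 2 *m X t) j k).
  move=> j k; apply: (iR_le_ae (mG j k)); last first.
    by apply: filterS ae => t [h1 h2]; apply: G_bound.
  apply: iR_Z; rewrite /mxtrace; apply: iR_sum => i; apply: iR_abs; exact: iW.
split.
- rewrite /bwl /bwu !raddfB /= lerD2l lerN2.
  rewrite tr_Emx // tr_SEmx //; apply: Ex_le_ae.
  + by apply: iR_tr.
  + by apply: iR_trS.
  + by apply: filterS ae => t [h1 h2]; apply: bias_ineq.
- rewrite /vwu /vwl tr_Emx // tr_SEmx //; apply: Ex_le_ae.
  + by apply: iR_tr.
  + by apply: iR_trS.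
  + by apply: filterS ae => t [h1 h2]; apply: var_ineq.
Qed.
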